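(* Assume there exists a $1$-perfect code in $H(q+1,q)$. Let $f$ be a $(b,c)$-coloring of $H(n,q)$ with main eigenvalue $\lambda\le0$. Then for all $t_1,t_2\in\{0,\dots,q\}$ with $t_1+t_2\notin\{0,2q\}$ there exists a $\big(q(b+c)-(ct_1+bt_2),\ ct_1+bt_2\big)$-coloring $F$ of $H(qn-\lambda,q)$, and $F$ has main eigenvalue $\lambda$.
   Context: The Hamming graph $H(n,q)$ has vertex set $\mathbb{Z}_q^n$, two vertices adjacent iff they differ in exactly one coordinate. A perfect $2$-coloring is a surjective map onto $\{1,2\}$ such that each vertex of color $i$ has a constant number of neighbours of each color. A $(b,c)$-coloring of $H(n,q)$ is a perfect $2$-coloring in which each color-1 vertex has exactly $b$ neighbours of color 2 and each color-2 vertex has exactly $c$ neighbours of color 1; its main eigenvalue is $\lambda=n(q-1)-(b+c)$. A $1$-perfect code in $H(n,q)$ is a set $C$ of vertices such that every radius-$1$ Hamming ball contains exactly one element of $C$. *)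

(* Defs.v *)
From HB Require Import structures.
From mathcomp Require Import all_boot all_order all_algebra.
Set Implicit Arguments. Unset Strict Implicit. Unset Printing Implicit Defensive.
Import Order.TTheory GRing.Theory Num.Theory.

Definition hvert (n q : nat) := {ffun 'I_n -> 'I_q}.

Definition hdist (n q : nat) (x y : hvert n q) : nat := #|[set i | x i != y i]|.

Definition hadj (n q : nat) (x y : hvert n q) : bool := hdist x y == 1%N.

Definition ncol (n q : nat) (f : hvert n q -> nat) (x : hvert n q) (k : nat) : nat :=
  #|[set y : hvert n q | hadj x y && (f y == k)]|.

(* A (b,c)-coloring of H(n,q): a surjective map onto {1,2} such that every
   colour-1 vertex has exactly b neighbours of colour 2 and every colour-2
   vertex has exactly c neighbours of colour 1.  (Since H(n,q) is regular of
   degree n(q-1), this makes the colouring perfect.) *)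
Definition bc_coloring (n q : nat) (f : hvert n q -> nat) (b c : nat) : Prop :=
  [/\ forall x, f x = 1%N \/ f x = 2%N,
      exists x, f x = 1%N,
      exists x, f x = 2%N,
      forall x, f x = 1%N -> ncol f x 2 = b
    & forall x, f x = 2%N -> ncol f x 1 = c].

Definition main_eig (n q b c : nat) : int :=
  ((n * (q - 1))%N)%:Z - ((b + c)%N)%:Z.

Definition perfect_code1 (n q : nat) (C : {set hvert n q}) : Prop :=
  forall x : hvert n q, #|[set y in C | hdist x y <= 1]| = 1%N.

(* Main.v *)
Require Import Defs.
From HB Require Import structures.
From mathcomp Require Import all_boot all_order all_algebra zify ring.
Import Order.TTheory GRing.Theory Num.Theory.
Set Implicit Arguments. Unset Strict Implicit. Unset Printing Implicit Defensive.

Definition upd n q (x : hvert n q) (i : 'I_n) (v : 'I_q) : hvert n q :=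
  [ffun j => if j == i then v else x j].

Lemma dist1_eq n q (x y : hvert n q) i0 i :
  hdist x y <= 1 -> x i0 != y i0 -> i != i0 -> x i = y i.
Proof.
move=> hd ni0 nii0; apply/eqP; apply: contraTT hd => ni.
rewrite -ltnNge /hdist.
have <- : #|[set i0; i]| = 2 by rewrite cards2 eq_sym nii0.
by apply: subset_leq_card; apply/subsetP=> j; rewrite !inE => /orP[] /eqP ->.
Qed.

Lemma code_eq n q (C : {set hvert n q}) (HC : perfect_code1 C) c c' :
  c \in C -> c' \in C -> #|[set i | c i != c' i]| <= 2 -> c = c'.
Proof.
move=> cC c'C hd; set D := [set i | c i != c' i] in hd.
case: (set_0Vmem D) => [D0 | [i iD]].
  apply/ffunP=> j; apply/eqP; apply: negbNE; apply/negP=> nj.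
  have jD : j \in D by rewrite inE. by rewrite D0 inE in jD.
set m := upd c i (c' i).
have h1 : hdist m c <= 1.
  rewrite /hdist -(cards1 i); apply: subset_leq_card; apply/subsetP=> j.
  rewrite !inE !ffunE; case: (eqVneq j i) => [-> //|]; by rewrite eqxx.
have h2 : hdist m c' <= 1.
  have : #|D :\ i| <= 1 by move: hd; rewrite (cardsD1 i D) iD.
  apply: leq_trans; apply: subset_leq_card; apply/subsetP=> j.
  rewrite !inE !ffunE; case: (eqVneq j i) => [->|nj] /=; first by rewrite eqxx.
  by [].
have := HC m; move/eqP/cards1P=> [y Hy].
have : c \in [set y in C | hdist m y <= 1] by rewrite inE cC h1.
have : c' \in [set y in C | hdist m y <= 1] by rewrite inE c'C h2.
by rewrite Hy !inE => /eqP -> /eqP ->.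
Qed.
Lemma hadj_upd n q (x y : hvert n q) :
  hadj x y = [exists i, (y i != x i) && (y == upd x i (y i))].
Proof.
rewrite /hadj /hdist; apply/idP/existsP.
  move/cards1P=> [i Hi]; exists i.
  have Hj : forall j, (x j != y j) = (j == i).
    by move=> j; have := f_equal (fun S : {set _} => j \in S) Hi; rewrite !inE.
  rewrite eq_sym Hj eqxx /=; apply/eqP/ffunP=> j; rewrite ffunE.
  case: eqP => [->//|/eqP nj]; apply/eqP; rewrite eq_sym.
  by apply: negbNE; rewrite Hj.
move=> [i /andP[ni /eqP ->]]; apply/cards1P; exists i.
apply/setP=> j; rewrite !inE !ffunE; case: (eqVneq j i)=> [->|nj]; first by rewrite eq_sym ni.
by rewrite eqxx.
Qed.

Lemma nbr_sum n q (x : hvert n q) (G : hvert n q -> nat) :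
  \sum_(y | hadj x y) G y = \sum_(i : 'I_n) \sum_(v : 'I_q | v != x i) G (upd x i v).
Proof.
rewrite pair_big_dep /=.
set A := [set p : 'I_n * 'I_q | p.2 != x p.1].
have inj : {in A &, injective (fun p => upd x p.1 p.2)}.
  move=> [i v] [i' v']; rewrite !inE /= => nv nv' /ffunP E.
  have := E i; rewrite !ffunE eqxx; case: eqP => [<- -> //|_ e].
  by rewrite e eqxx in nv.
have -> : \sum_(p | p.2 != x p.1) G (upd x p.1 p.2) = \sum_(p in A) G (upd x p.1 p.2).
  by apply: eq_bigl => p; rewrite inE.
rewrite -(big_imset G inj) /=; apply: eq_bigl => y.
rewrite hadj_upd; apply/existsP/imsetP.
  move=> [i /andP[ni /eqP ey]]; exists (i, y i) => //.
  by rewrite inE.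
move=> [[i v]]; rewrite inE /= => nv ->; exists i.
by rewrite ffunE eqxx nv /=.
Qed.

Definition wd k (p : 'I_k.+2) : 'I_k.+3 := widen_ord (leqnSn _) p.

Lemma wd_eq k (p p' : 'I_k.+2) : (wd p == wd p') = (p == p').
Proof. by apply/eqP/eqP => [/(f_equal val) /= /val_inj|->]. Qed.

Lemma wd_max k (p : 'I_k.+2) : (wd p == ord_max) = false.
Proof. apply/negbTE/eqP => /(f_equal val) /=; have := ltn_ord p; lia. Qed.

Lemma pos_cases k (i : 'I_k.+3) : i = ord_max \/ exists p : 'I_k.+2, i = wd p.
Proof.
case: (eqVneq i ord_max) => [->|ni]; [by left|right].
have lt : i < k.+2.
  have := ltn_ord i; move: ni; rewrite -val_eqE /= => ni; lia.
by exists (Ordinal lt); apply: val_inj.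
Qed.

Definition prefix_ok k (z : hvert k.+2 k.+2) (c : hvert k.+3 k.+2) :=
  [forall p : 'I_k.+2, (p != ord_max) ==> (c (wd p) == z p)].

Lemma cz_exists k (C : {set hvert k.+3 k.+2}) (HC : perfect_code1 C)
  (z : hvert k.+2 k.+2) : [exists c in C, prefix_ok z c].
Proof.
case: (boolP [exists c in C, prefix_ok z c]) => // H.
pose v (ab : 'I_k.+2 * 'I_k.+2) : hvert k.+3 k.+2 :=
  [ffun i : 'I_k.+3 => if i == ord_max then ab.2
                       else if i == wd ord_max then ab.1 else z (inord i)].
have vmax ab : v ab ord_max = ab.2 by rewrite ffunE eqxx.
have vL ab : v ab (wd ord_max) = ab.1 by rewrite ffunE wd_max eqxx.
have vp ab p : p != ord_max -> v ab (wd p) = z p.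
  by move=> np; rewrite ffunE wd_max wd_eq (negbTE np) inord_val.
have ex ab : exists c, (c \in C) && (hdist (v ab) c <= 1).
  have := HC (v ab); move/eqP/cards1P => [y Hy]; exists y.
  have : y \in [set y] by rewrite set11.
  by rewrite -Hy inE.
pose cw ab := xchoose (ex ab).
have cwP ab : (cw ab \in C) && (hdist (v ab) (cw ab) <= 1) := xchooseP (ex ab).
have nopre ab : exists p : 'I_k.+2, (p != ord_max) && (cw ab (wd p) != z p).
  have : ~~ prefix_ok z (cw ab).
    apply: contra H => Hp; apply/existsP; exists (cw ab).
    by case/andP: (cwP ab) => -> _.
  by rewrite negb_forall => /existsP [p]; rewrite negb_imply => Hp; exists p.
pose j ab := xchoose (nopre ab).
have jP ab : (j ab != ord_max) && (cw ab (wd (j ab)) != z (j ab)) := xchooseP (nopre ab).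
have cwv ab i : i != wd (j ab) -> cw ab i = v ab i.
  move=> ni; case/andP: (jP ab) => nj dj; case/andP: (cwP ab) => _ hd.
  symmetry; apply: (dist1_eq hd _ ni); by rewrite vp // eq_sym.
pose key ab : 'I_k.+2 * 'I_k.+2 := (j ab, cw ab (wd (j ab))).
have inj : injective key.
  move=> ab ab' [ej ev].
  have ecw : cw ab = cw ab'.
    case/andP: (cwP ab) => C1 _; case/andP: (cwP ab') => C2 _.
    apply: (code_eq HC C1 C2); apply: (@leq_trans #|[set wd (ord_max : 'I_k.+2); (ord_max : 'I_k.+3)]|); last by rewrite cards2; case: (_ != _).
    apply: subset_leq_card; apply/subsetP => i; rewrite !inE; case: (pos_cases i) => [->|[p ->]] di; first by rewrite eqxx orbT.
    case: (eqVneq p ord_max) => [->|np]; first by rewrite eqxx.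
    exfalso; move/negP: di; apply.
    case: (eqVneq p (j ab)) => [->|npj]; first by rewrite ev ej.
    rewrite cwv ?wd_eq // cwv ?wd_eq -?ej // !vp //.
  have nL : wd ord_max != wd (j ab) by rewrite wd_eq eq_sym; case/andP: (jP ab).
  have nM : (ord_max : 'I_k.+3) != wd (j ab) by rewrite eq_sym wd_max.
  have e1 := cwv ab _ nL; have e2 := cwv ab _ nM.
  rewrite ej in nL nM.
  have e1' := cwv ab' _ nL; have e2' := cwv ab' _ nM.
  move: ab ab' ej ev ecw e1 e2 e1' e2' {nL nM} => [a b] [a' b'] _ _ ->.
  rewrite vL vmax /= => -> -> ; rewrite vL vmax /= => -> ->. by [].
have : #|key @: [set: 'I_k.+2 * 'I_k.+2]| <= #|[set: 'I_k.+2] :\ ord_max| * #|[set: 'I_k.+2]|.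
  rewrite -cardsX; apply: subset_leq_card; apply/subsetP => _ /imsetP [ab _ ->].
  by rewrite !inE /= !andbT; case/andP: (jP ab).
rewrite card_imset // setDE setTI cardsC1 !cardsT card_prod !card_ord /=.
lia.
Qed.

Definition cz k (C : {set hvert k.+3 k.+2}) (z : hvert k.+2 k.+2) : hvert k.+3 k.+2 :=
  odflt [ffun _ => ord0] [pick c in C | prefix_ok z c].
Definition sg k C (z : hvert k.+2 k.+2) : 'I_k.+2 := (z ord_max - cz C z (wd ord_max))%R.
Definition hh k C (z : hvert k.+2 k.+2) : 'I_k.+2 := cz C z ord_max.
Definition rho k C (z : hvert k.+2 k.+2) := (sg C z, hh C z).

Section Block.
Variable k : nat.
Variable C : {set hvert k.+3 k.+2}.
Hypothesis HC : perfect_code1 C.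
Implicit Types z : hvert k.+2 k.+2.

Lemma czP z : (cz C z \in C) && prefix_ok z (cz C z).
Proof.
rewrite /cz; case: pickP => [c //|H].
by have /existsP [c /andP [c1 c2]] := cz_exists HC z; have := H c; rewrite c1 c2.
Qed.

Lemma cz_pre z p : p != ord_max -> cz C z (wd p) = z p.
Proof. by move=> np; case/andP: (czP z) => _ /forallP /(_ p); rewrite np => /eqP. Qed.

Lemma cz_eq_sub z1 z2 a b :
  (forall i, cz C z1 i != cz C z2 i -> (i == a) || (i == b)) -> cz C z1 = cz C z2.
Proof.
move=> H; case/andP: (czP z1) => C1 _; case/andP: (czP z2) => C2 _.
apply: (code_eq HC C1 C2); apply: (@leq_trans #|[set a; b]|); last by rewrite cards2; case: (_ != _).
by apply: subset_leq_card; apply/subsetP => i; rewrite !inE => /H.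
Qed.

Lemma upd_same n q (z : hvert n q) p v j : j != p -> upd z p v j = z j.
Proof. by move=> nj; rewrite ffunE (negbTE nj). Qed.
Lemma upd_at n q (z : hvert n q) p v : upd z p v p = v.
Proof. by rewrite ffunE eqxx. Qed.

Lemma cz_L z v : cz C (upd z ord_max v) = cz C z.
Proof.
apply: (@cz_eq_sub _ _ (wd ord_max) ord_max) => i.
case: (pos_cases i) => [->|[p ->]]; first by rewrite eqxx orbT.
case: (eqVneq p ord_max) => [->|np]; first by rewrite eqxx.
by rewrite !cz_pre // upd_same // eqxx.
Qed.

Lemma sg_upd z p v : v != z p -> sg C (upd z p v) != sg C z.
Proof.
move=> nv; rewrite /sg; case: (eqVneq p ord_max) => [ep|np].
  subst p; rewrite cz_L upd_at (inj_eq (addIr _)) //.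
rewrite upd_same 1?eq_sym //.
rewrite (inj_eq (addrI _)) (inj_eq oppr_inj); apply/eqP => eP.
have : cz C (upd z p v) = cz C z.
  apply: (@cz_eq_sub _ _ (wd p) ord_max) => i.
  case: (pos_cases i) => [->|[p' ->]]; first by rewrite eqxx orbT.
  case: (eqVneq p' ord_max) => [->|np']; first by rewrite eP eqxx.
  case: (eqVneq p' p) => [->|npp]; first by rewrite eqxx.
  by rewrite !cz_pre // upd_same // eqxx.
move=> /(congr1 (fun c : hvert k.+3 k.+2 => c (wd p))); rewrite !cz_pre // upd_at => e.
by rewrite e eqxx in nv.
Qed.

Lemma hh_upd z p v : p != ord_max -> v != z p -> hh C (upd z p v) != hh C z.
Proof.
move=> np nv; rewrite /hh; apply/eqP => eP.
have : cz C (upd z p v) = cz C z.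
  apply: (@cz_eq_sub _ _ (wd p) (wd ord_max)) => i.
  case: (pos_cases i) => [->|[p' ->]]; first by rewrite eP eqxx.
  case: (eqVneq p' ord_max) => [->|np']; first by rewrite eqxx orbT.
  case: (eqVneq p' p) => [->|npp]; first by rewrite eqxx.
  by rewrite !cz_pre // upd_same // eqxx.
move=> /(congr1 (fun c : hvert k.+3 k.+2 => c (wd p))); rewrite !cz_pre // upd_at => e.
by rewrite e eqxx in nv.
Qed.

Lemma rho_two z p p' v v' : p != ord_max -> p' != ord_max -> p != p' ->
  v != z p -> v' != z p' -> rho C (upd z p v) != rho C (upd z p' v').
Proof.
move=> np np' npp nv nv'; apply/eqP; rewrite /rho /sg /hh => E; have /= eP0 := congr1 fst E; have /= eH := congr1 snd E; move: eP0.
rewrite !upd_same ?(eq_sym ord_max) // => eP0; have eP := oppr_inj (addrI _ eP0).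
have : cz C (upd z p v) = cz C (upd z p' v').
  apply: (@cz_eq_sub _ _ (wd p) (wd p')) => i.
  case: (pos_cases i) => [->|[p'' ->]]; first by rewrite eH eqxx.
  case: (eqVneq p'' ord_max) => [->|np'']; first by rewrite eP eqxx.
  case: (eqVneq p'' p) => [->|n1]; first by rewrite eqxx.
  case: (eqVneq p'' p') => [->|n2]; first by rewrite eqxx orbT.
  by rewrite !cz_pre // !upd_same // eqxx.
move=> /(congr1 (fun c : hvert k.+3 k.+2 => c (wd p))); rewrite !cz_pre // upd_at upd_same => [e|]; last by [].
by rewrite e eqxx in nv.
Qed.

Lemma upd_upd n q (z : hvert n q) p v v' : upd (upd z p v) p v' = upd z p v'.
Proof. by apply/ffunP => j; rewrite !ffunE; case: eqP. Qed.

Definition Ablk (z : hvert k.+2 k.+2) := [set pv : 'I_k.+2 * 'I_k.+2 | pv.2 != z pv.1].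
Definition Bblk (z : hvert k.+2 k.+2) := [set us : 'I_k.+2 * 'I_k.+2 | us.1 != sg C z].

Lemma rho_inj z : {in Ablk z &, injective (fun pv => rho C (upd z pv.1 pv.2))}.
Proof.
move=> [p v] [p' v']; rewrite !inE /= => nv nv' E.
case: (eqVneq p p') => [ep|npp].
  subst p'; case: (eqVneq v v') => [->//|nvv].
  have : v' != upd z p v p by rewrite upd_at eq_sym.
  move/(sg_upd); rewrite upd_upd; have /= -> := congr1 fst E; by rewrite eqxx.
case: (eqVneq p ord_max) => [ep|np].
  subst p; have np' : p' != ord_max by rewrite eq_sym.
  have := hh_upd np' nv'; move: E; rewrite /rho => -[_ <-].
  by rewrite /hh cz_L eqxx.
case: (eqVneq p' ord_max) => [ep'|np'].
  subst p'; have := hh_upd np nv; move: E; rewrite /rho => -[_ ->].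
  by rewrite /hh cz_L eqxx.
by have := rho_two np np' npp nv nv'; rewrite E eqxx.
Qed.

Lemma card_nbr n q (z : hvert n q) :
  #|[set pv : 'I_n * 'I_q | pv.2 != z pv.1]| = (n * q.-1)%N.
Proof.
rewrite -sum1_card (eq_bigl (fun pv : 'I_n * 'I_q => pv.2 != z pv.1)); last by move=> x; rewrite inE.
rewrite -(pair_big_dep xpredT (fun p v => v != z p) (fun _ _ => 1%N)) /=.
rewrite (eq_bigr (fun _ => q.-1)); first by rewrite sum_nat_const cardT size_enum_ord.
by move=> i _; rewrite sum1_card cardC1 card_ord.
Qed.

Lemma rho_img z : (fun pv => rho C (upd z pv.1 pv.2)) @: Ablk z = Bblk z.
Proof.
apply/eqP; rewrite eqEcard; apply/andP; split.
  apply/subsetP => x /imsetP [[p v]]; rewrite !inE /= => nv ->.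
  exact: sg_upd.
rewrite card_in_imset; last exact: rho_inj.
rewrite /Ablk card_nbr /Bblk.
have -> : [set us : 'I_k.+2 * 'I_k.+2 | us.1 != sg C z] = setX [set~ sg C z] setT.
  by apply/setP => -[a b]; rewrite !inE andbT.
by rewrite cardsX cardsC1 cardsT card_ord mulnC.
Qed.

Lemma block_sum z (G : 'I_k.+2 * 'I_k.+2 -> nat) :
  (\sum_p \sum_(v | v != z p) G (rho C (upd z p v)) =
   \sum_(us | us.1 != sg C z) G us)%N.
Proof.
rewrite pair_big_dep /=.
rewrite (eq_bigl (fun pv => pv \in Ablk z)); last by move=> x; rewrite inE.
rewrite -(big_imset G (@rho_inj z)) rho_img.
by apply: eq_bigl => x; rewrite inE.
Qed.

Lemma rho_surj us : exists z, rho C z = us.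
Proof.
pose z0 : hvert k.+2 k.+2 := [ffun _ => ord0].
have H z : us.1 != sg C z -> exists z', rho C z' = us.
  move=> nu; have : us \in Bblk z by rewrite inE.
  by rewrite -rho_img => /imsetP [pv _ ->]; exists (upd z pv.1 pv.2).
case: (eqVneq us.1 (sg C z0)) => [e|]; last exact: H.
pose z1 := upd z0 ord0 (ord_max).
apply: (H z1); rewrite e eq_sym; apply: sg_upd.
by rewrite ffunE.
Qed.

End Block.

Lemma sum_transl k (a : 'I_k.+2) (G : 'I_k.+2 -> nat) :
  (\sum_h G (a + h)%R = \sum_h G h)%N.
Proof. by rewrite [RHS](reindex_inj (addrI a)). Qed.

Lemma sum_transl_neq k (a s : 'I_k.+2) (G : 'I_k.+2 -> nat) :
  (\sum_(v | v != a) G (s - a + v)%R = \sum_(s' | s' != s) G s')%N.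
Proof.
rewrite [RHS](reindex_inj (addrI (s - a)%R)) /=; apply: eq_bigl => v.
apply/esym. by rewrite -addrA -[X in _ != X]addr0 (inj_eq (addrI _)) addrC subr_eq0.
Qed.

Section Main.
Variables (k n d N : nat) (C : {set hvert k.+3 k.+2}).
Hypothesis HC : perfect_code1 C.
Hypothesis eT : #|{: ('I_n * 'I_k.+2) + 'I_d}| = N.
Implicit Types x y : hvert N k.+2.

Definition E (u : ('I_n * 'I_k.+2) + 'I_d) : 'I_N := cast_ord eT (enum_rank u).
Definition Einv (i : 'I_N) : ('I_n * 'I_k.+2) + 'I_d := enum_val (cast_ord (esym eT) i).
Lemma EK : cancel E Einv.
Proof. by move=> u; rewrite /E /Einv cast_ordK enum_rankK. Qed.
Lemma EinvK : cancel Einv E.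
Proof. by move=> i; rewrite /E /Einv enum_valK cast_ordKV. Qed.
Lemma E_inj : injective E. Proof. exact: can_inj EK. Qed.
Lemma E_eq u u' : (E u == E u') = (u == u').
Proof. by apply/eqP/eqP => [/E_inj|->]. Qed.

Lemma inl_eq (a b : 'I_n * 'I_k.+2) : (inl a == inl b :> ('I_n * 'I_k.+2 + 'I_d)) = (a == b).
Proof. by []. Qed.

Definition blk x (j : 'I_n) : hvert k.+2 k.+2 := [ffun p => x (E (inl (j, p)))].
Definition wmap x : hvert n k.+2 := [ffun j => sg C (blk x j)].
Definition smap x : 'I_k.+2 := (\sum_j hh C (blk x j) + \sum_e x (E (inr e)))%R.

Lemma blk_upd_e x e v j : blk (upd x (E (inr e)) v) j = blk x j.
Proof. by apply/ffunP => p; rewrite !ffunE E_eq. Qed.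

Lemma blk_upd_b x j p v j' :
  blk (upd x (E (inl (j, p))) v) j' = if j' == j then upd (blk x j) p v else blk x j'.
Proof.
apply/ffunP => p'; rewrite !ffunE E_eq; case: (eqVneq j' j) => [->|nj].
  by rewrite !ffunE inl_eq xpair_eqE eqxx.
by rewrite inl_eq xpair_eqE (negbTE nj) ffunE.
Qed.

Lemma wmap_upd_e x e v : wmap (upd x (E (inr e)) v) = wmap x.
Proof. by apply/ffunP => j; rewrite !ffunE blk_upd_e. Qed.

Lemma smap_upd_e x e v : smap (upd x (E (inr e)) v) = (smap x - x (E (inr e)) + v)%R.
Proof.
rewrite /smap (eq_bigr (fun j => hh C (blk x j))); last by move=> j _; rewrite blk_upd_e.
rewrite (bigD1 e) //= [in RHS](bigD1 e) //= ffunE eqxx.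
rewrite (eq_bigr (fun e' => x (E (inr e')))); last first.
  by move=> e' ne; rewrite ffunE E_eq; case: eqP => // [[]] eq; rewrite eq eqxx in ne.
by ring.
Qed.

Lemma wmap_upd_b x j p v :
  wmap (upd x (E (inl (j, p))) v) = upd (wmap x) j (sg C (upd (blk x j) p v)).
Proof.
apply/ffunP => j'; rewrite !ffunE blk_upd_b; by case: eqP.
Qed.

Lemma smap_upd_b x j p v :
  smap (upd x (E (inl (j, p))) v) =
  (smap x - hh C (blk x j) + hh C (upd (blk x j) p v))%R.
Proof.
rewrite /smap (eq_bigr (fun e => x (E (inr e)))); last first.
  by move=> e _; rewrite ffunE E_eq.
rewrite (bigD1 j) //= [in RHS](bigD1 j) //= blk_upd_b eqxx.
rewrite (eq_bigr (fun j' => hh C (blk x j'))); last first.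
  by move=> j' nj; rewrite blk_upd_b (negbTE nj).
by ring.
Qed.

Lemma main_count x (Phi : hvert n k.+2 -> 'I_k.+2 -> nat) :
  (\sum_(y | hadj x y) Phi (wmap y) (smap y) =
   \sum_(w' | hadj (wmap x) w') \sum_h Phi w' h
   + d * \sum_(s' | s' != smap x) Phi (wmap x) s')%N.
Proof.
rewrite nbr_sum (reindex E (onW_bij _ (Bijective EK EinvK))) /= big_sumType /=.
congr (_ + _)%N; last first.
  rewrite (eq_bigr (fun _ => \sum_(s' | s' != smap x) Phi (wmap x) s')).
    by rewrite sum_nat_const cardT size_enum_ord.
  move=> e _; rewrite -(sum_transl_neq (x (E (inr e))) (smap x)).
  by apply: eq_bigr => v _; rewrite wmap_upd_e smap_upd_e.
set G := fun u => (\sum_(v | v != x (E u))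
   Phi (wmap (upd x (E u) v)) (smap (upd x (E u) v)))%N.
rewrite (eq_bigr (fun i => G (inl i))) // -[LHS]/(\sum_i G (inl i))%N.
have -> : (\sum_i G (inl i) = \sum_j \sum_p G (inl (j, p)))%N.
  by rewrite pair_bigA; apply: eq_bigr => -[].
rewrite nbr_sum /G.
apply: eq_bigr => j _.
have -> : (\sum_p \sum_(v | v != x (E (inl (j, p))))
   Phi (wmap (upd x (E (inl (j, p))) v)) (smap (upd x (E (inl (j, p))) v)) =
  \sum_p \sum_(v | v != blk x j p)
   (fun us => Phi (upd (wmap x) j us.1) (smap x - hh C (blk x j) + us.2)%R)
     (rho C (upd (blk x j) p v)))%N.
  apply: eq_bigr => p _; rewrite ffunE; apply: eq_bigr => v _.
  by rewrite wmap_upd_b smap_upd_b.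
have /= -> := block_sum HC (blk x j)
  (fun us => Phi (upd (wmap x) j us.1) (smap x - hh C (blk x j) + us.2)%R).
have /= <- := pair_big_dep xpredT (fun u _ => u != sg C (blk x j))
   (fun u h => Phi (upd (wmap x) j u) (smap x - hh C (blk x j) + h)%R).
rewrite ffunE [RHS]big_mkcond /=; apply: eq_bigr => u _.
case: (eqVneq u (sg C (blk x j))) => [->|nu] /=.
  by rewrite big_pred0 // => ?; rewrite eqxx.
exact: (sum_transl _ (fun h => Phi (upd (wmap x) j u) h)).
Qed.

End Main.

Lemma vertex_exists k n d N (C : {set hvert k.+3 k.+2}) (HC : perfect_code1 C)
  (eT : #|{: ('I_n * 'I_k.+2) + 'I_d}| = N) (w0 : hvert n k.+2) (s0 : 'I_k.+2) (j0 : 'I_n) :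
  exists x, wmap C eT x = w0 /\ smap C eT x = s0.
Proof.
have ex j : exists z, rho C z == (w0 j, if j == j0 then s0 else 0%R).
  by case: (rho_surj HC (w0 j, if j == j0 then s0 else 0%R)) => z e; exists z; rewrite e.
pose Z j := xchoose (ex j).
have ZP j : rho C (Z j) = (w0 j, if j == j0 then s0 else 0%R) := eqP (xchooseP (ex j)).
pose X : hvert N k.+2 := [ffun i => match Einv eT i with inl jp => Z jp.1 jp.2 | inr _ => 0%R end].
have bX j : blk eT X j = Z j by apply/ffunP => p; rewrite !ffunE EK.
exists X; split.
  by apply/ffunP => j; rewrite ffunE bX; have := congr1 fst (ZP j).
rewrite /smap (eq_bigr (fun j => if j == j0 then s0 else 0%R)); last first.
  by move=> j _; rewrite bX; have := congr1 snd (ZP j).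
rewrite -big_mkcond big_pred1_eq big1 ?addr0 // => e _.
by rewrite ffunE EK.
Qed.

Lemma ncolE n q (f : hvert n q -> nat) x col :
  ncol f x col = (\sum_(y | hadj x y) (f y == col))%N.
Proof.
rewrite /ncol -sum1_card big_mkcond /= [RHS]big_mkcond /=; apply: eq_bigr => y _.
by rewrite inE; case: hadj; case: eqP.
Qed.

Lemma sum_f n q (f : hvert n q -> nat) w (psi : nat -> nat) :
  (forall y, f y = 1 \/ f y = 2) ->
  (\sum_(y | hadj w y) psi (f y) = psi 1 * ncol f w 1 + psi 2 * ncol f w 2)%N.
Proof.
move=> fv; rewrite !ncolE !big_distrr -big_split /=; apply: eq_bigr => y _.
by case: (fv y) => ->; rewrite /= ?muln1 ?muln0 ?addn0.
Qed.

Lemma deg n q (f : hvert n q -> nat) w :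
  (forall y, f y = 1 \/ f y = 2) -> (ncol f w 1 + ncol f w 2 = n * q.-1)%N.
Proof.
move=> fv; rewrite !ncolE -big_split /=.
rewrite (eq_bigr (fun _ => 1%N)); last by move=> y _; case: (fv y) => ->.
rewrite nbr_sum (eq_bigr (fun _ => q.-1)).
  by rewrite sum_nat_const cardT size_enum_ord.
by move=> i _; rewrite sum1_card cardC1 card_ord.
Qed.

Lemma sum_lt k t : t <= k.+2 -> (\sum_(h : 'I_k.+2) (h < t) = t)%N.
Proof.
move=> tk; have -> : (\sum_(h : 'I_k.+2) (h < t) = \sum_(0 <= h < k.+2) (h < t))%N by rewrite big_mkord.
rewrite (@big_cat_nat _ _ _ t) //=.
rewrite (eq_big_nat _ _ (F2 := fun _ => 1%N)); last by move=> i /andP [_ ->].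
rewrite [X in (_ + X)%N](eq_big_nat _ _ (F2 := fun _ => 0%N)); last first.
  by move=> i /andP [ti _]; rewrite ltnNge ti.
by rewrite !sum_nat_const_nat; lia.
Qed.

Lemma sum_ge k t : t <= k.+2 -> (\sum_(h : 'I_k.+2) (t <= h) = k.+2 - t)%N.
Proof.
move=> tk; have := sum_lt tk.
have : (\sum_(h : 'I_k.+2) ((t <= h) + (h < t)) = k.+2)%N.
  rewrite (eq_bigr (fun _ => 1%N)); last by move=> h _; case: leqP.
  by rewrite sum_nat_const card_ord muln1.
rewrite big_split /=; lia.
Qed.
Lemma arith1 Q t1 t2 X b c P d : t1 <= Q -> t2 <= Q -> X + b = P -> P <= b + c -> d = b + c - P ->
 (Q - t1)*X + (Q - t2)*b + d*(Q - t1) = Q*(b+c) - (c*t1 + b*t2).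
Proof.
move=> h1 h2 e1 e2 e3.
have e : X + d = c by lia.
rewrite (mulnC d) -addnA (addnC _ ((Q-t1)*d)) addnA -mulnDr e.
rewrite !mulnBl mulnDr (mulnC c) (mulnC b).
have : t1 * c <= Q * c by rewrite leq_mul2r h1 orbT.
have : t2 * b <= Q * b by rewrite leq_mul2r h2 orbT.
lia.
Qed.
Lemma arith2 t1 t2 X b c P d : X + b = P -> P <= b + c -> d = b + c - P ->
 t1 * X + t2 * b + d * t1 = c*t1 + b*t2.
Proof.
move=> e1 e2 e3.
have e : X + d = c by lia.
by rewrite (mulnC d) -addnA (addnC _ (t1*d)) addnA -mulnDr e (mulnC c) (mulnC b).
Qed.
Unset Implicit Arguments.

Theorem theorem6 (q n b c : nat) (f : hvert n q -> nat) :
  (exists C : {set hvert q.+1 q}, perfect_code1 C) ->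
  bc_coloring f b c ->
  (main_eig n q b c <= 0)%R ->
  forall t1 t2 : nat, t1 <= q -> t2 <= q ->
  t1 + t2 != 0 -> t1 + t2 != 2 * q ->
  forall N : nat, (N%:Z = (q * n)%N%:Z - main_eig n q b c)%R ->
  exists F : hvert N q -> nat,
    bc_coloring F (q * (b + c) - (c * t1 + b * t2)) (c * t1 + b * t2) /\
    main_eig N q (q * (b + c) - (c * t1 + b * t2)) (c * t1 + b * t2)
      = main_eig n q b c.
Proof.
case: q f => [|[|k]] f [C HC] [fv [x1 fx1] [x2 fx2] fb fc] lam t1 t2 t1q t2q nt0 nt2 N eN.
- have e : x1 = x2 by apply/ffunP => i; case: (x1 i).
  by rewrite e fx2 in fx1.
- have h0 (a : 'I_1) : a = ord0 by apply: val_inj; case: a => [[]].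
  have e : x1 = x2 by apply/ffunP => i; rewrite (h0 (x1 i)) (h0 (x2 i)).
  by rewrite e fx2 in fx1.
have n0 : 0 < n.
  case: (posnP n) => // n0'; exfalso.
  have e : x1 = x2 by apply/ffunP => i; have := ltn_ord i; rewrite {2}n0'.
  by rewrite e fx2 in fx1.
pose j0 : 'I_n := Ordinal n0.
have hle : (n * (k.+2 - 1) <= b + c)%N.
  by move: lam; rewrite /main_eig subr_le0 lez_nat.
pose d := (b + c - n * (k.+2 - 1))%N.
have hN : N = (k.+2 * n + d)%N.
  move: eN; rewrite /main_eig /d.
  move: hle; set P := (n * _)%N; set M := (k.+2 * n)%N; lia.
have eT : #|{: ('I_n * 'I_k.+2) + 'I_d}| = N by rewrite card_sum card_prod !card_ord hN mulnC.
pose tk (col : nat) := if col == 1 then t1 else t2.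
pose G (w : hvert n k.+2) (s : 'I_k.+2) := if (s < tk (f w))%N then 1 else 2.
pose F x := G (wmap C eT x) (smap C eT x).
have cnt x col : ncol F x col =
   (\sum_(w' | hadj (wmap C eT x) w') \sum_h (G w' h == col)
    + d * \sum_(s' | s' != smap C eT x) (G (wmap C eT x) s' == col))%N.
  by rewrite ncolE (main_count HC eT x (fun w s => (G w s == col))).
have tkq col : (tk col <= k.+2)%N by rewrite /tk; case: eqP.
have s2 w : (\sum_h (G w h == 2) = k.+2 - tk (f w))%N.
  rewrite -(sum_ge (tkq (f w))); apply: eq_bigr => h _; rewrite /G; by case: ltnP.
have s1 w : (\sum_h (G w h == 1) = tk (f w))%N.
  rewrite -(sum_lt (tkq (f w))); apply: eq_bigr => h _; rewrite /G; by case: ltnP.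
have sneq w s col : G w s != col ->
    (\sum_(s' | s' != s) (G w s' == col) = \sum_h (G w h == col))%N.
  by move=> ns; rewrite [RHS](bigD1 s) //= (negbTE ns).
have dg w := deg w fv.
exists F; split; last first.
  have hS : (c * t1 + b * t2 <= k.+2 * (b + c))%N.
    rewrite mulnDr addnC; apply: leq_add; rewrite mulnC leq_mul2r ?t1q ?t2q orbT //.
  rewrite /main_eig subnK //.
  have ebc : (b + c = d + n * (k.+2 - 1))%N by rewrite /d subnK.
  have key : (N * (k.+2 - 1) + (b + c) = n * (k.+2 - 1) + k.+2 * (b + c))%N.
    rewrite hN ebc; rewrite !subn1 /=; ring.
  move: key; set A := (N * _)%N; set B := (n * _)%N; set D := (k.+2 * _)%N; lia.
split.
- by move=> x; rewrite /F /G; case: ifP; [left|right].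
- case: (posnP t1) => [t10|t1p].
    have t2p : (0 < t2)%N by move: nt0; rewrite t10; lia.
    have [x [Hw Hs]] := vertex_exists HC eT x2 ord0 j0.
    by exists x; rewrite /F Hw Hs /G /tk fx2 /= t2p.
  have [x [Hw Hs]] := vertex_exists HC eT x1 ord0 j0.
  by exists x; rewrite /F Hw Hs /G /tk fx1 /= t1p.
- case: (ltnP t1 k.+2) => [t1lt|t1ge].
    have [x [Hw Hs]] := vertex_exists HC eT x1 ord_max j0.
    by exists x; rewrite /F Hw Hs /G /tk fx1 /= ltnNge -ltnS t1lt.
  have t2lt : (t2 < k.+2)%N by move: nt2 t1q t2q t1ge; lia.
  have [x [Hw Hs]] := vertex_exists HC eT x2 ord_max j0.
  by exists x; rewrite /F Hw Hs /G /tk fx2 /= ltnNge -ltnS t2lt.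
- move=> x Fx; rewrite cnt sneq; last by move: Fx; rewrite /F => ->.
  rewrite s2 (eq_bigr (fun w' => k.+2 - tk (f w'))); last by move=> w' _; rewrite s2.
  have /= -> := sum_f (wmap C eT x) (fun col => k.+2 - tk col) fv; rewrite /tk /=.
  have dgw := dg (wmap C eT x).
  case: (fv (wmap C eT x)) => fw; rewrite fw /=.
    rewrite (fb _ fw); rewrite (fb _ fw) in dgw.
    exact: (arith1 t1q t2q dgw hle).
  rewrite (fc _ fw); rewrite (fc _ fw) in dgw.
  have := arith1 (Q:=k.+2) t2q t1q (X:=ncol f (wmap C eT x) 2) (b:=c) (c:=b) (d:=d) _ (leq_trans hle (eq_leq (addnC b c))).
  rewrite addnC => /(_ dgw); rewrite /d (addnC c b) => /(_ erefl).
  lia.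
- move=> x Fx; rewrite cnt sneq; last by move: Fx; rewrite /F => ->.
  rewrite s1 (eq_bigr (fun w' => tk (f w'))); last by move=> w' _; rewrite s1.
  have /= -> := sum_f (wmap C eT x) (fun col => tk col) fv; rewrite /tk /=.
  have dgw := dg (wmap C eT x).
  case: (fv (wmap C eT x)) => fw; rewrite fw /=.
    rewrite (fb _ fw); rewrite (fb _ fw) in dgw.
    exact: (arith2 t1 t2 dgw hle).
  rewrite (fc _ fw); rewrite (fc _ fw) in dgw.
  have := arith2 t2 t1 (X:=ncol f (wmap C eT x) 2) (b:=c) (c:=b) (d:=d) _ (leq_trans hle (eq_leq (addnC b c))).
  rewrite addnC => /(_ dgw); rewrite /d (addnC c b) => /(_ erefl).
  lia.
Qed.
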